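(* Let $q$ be a prime power and let $n_1,n_2$ be coprime odd positive integers, each coprime to $q$. If $x-1$ is the only SCRIM factor of $x^{n_1}-1$ and the only SCRIM factor of $x^{n_2}-1$ in $\mathbb{F}_{q^2}[x]$, then $|\Omega_{q^2,n_1n_2}|=|\Omega_{q^2,n_1}|\,|\Omega_{q^2,n_2}|=1$.
   Context: $\mathbb{F}_{q^2}$ is the finite field with $q^2$ elements. For $\alpha\in\mathbb{F}_{q^2}$ put $\bar\alpha=\alpha^q$, and for $f(x)=\sum_i f_ix^i$ put $\overline{f(x)}=\sum_i \bar f_i x^i$. For $f(x)$ with $f(0)\neq 0$, $f^*(x)=x^{\deg f}f(0)^{-1}f(1/x)$ and $f^\dagger(x)=\overline{f^*(x)}$. A polynomial is SCRIM if it is monic, irreducible over $\mathbb{F}_{q^2}$, has nonzero constant term, and satisfies $f=f^\dagger$. $\Omega_{q^2,n}$ denotes the set of SCRIM polynomials in $\mathbb{F}_{q^2}[x]$ dividing $x^n-1$. *)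

(* Defs.v *)
From HB Require Import structures.
From mathcomp Require Import all_boot all_order all_algebra all_field.
From mathcomp Require Import boolp.
Set Implicit Arguments. Unset Strict Implicit. Unset Printing Implicit Defensive.
Import GRing.Theory.
Local Open Scope ring_scope.

Definition prime_power (q : nat) : Prop :=
  exists p k : nat, [/\ prime p, (0 < k)%N & q = (p ^ k)%N].

Definition conjq (F : finFieldType) (q : nat) (a : F) : F := a ^+ q.
Definition conjp (F : finFieldType) (q : nat) (f : {poly F}) : {poly F} :=
  map_poly (conjq q) f.

(* f^*(x) = x^{deg f} f(0)^{-1} f(1/x) : coefficient of x^i is f(0)^{-1} f_{deg f - i} *)
Definition recip (F : finFieldType) (f : {poly F}) : {poly F} :=
  (f`_0)^-1 *: \poly_(i < size f) f`_((size f).-1 - i).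

Definition dagger (F : finFieldType) (q : nat) (f : {poly F}) : {poly F} :=
  conjp q (recip f).

Definition SCRIM (F : finFieldType) (q : nat) (f : {poly F}) : Prop :=
  [/\ f \is monic, irreducible_poly f, f`_0 != 0 & f = dagger q f].

Definition inOmega (F : finFieldType) (q n : nat) (f : {poly F}) : Prop :=
  SCRIM q f /\ f %| 'X^n - 1.

(* Omega_{q^2,n} as a finite set; for n > 0 every divisor of x^n - 1 has
   size <= n+1, so it is captured inside {poly_(n.+1) F}. *)
Definition Omega (F : finFieldType) (q n : nat) : {set {poly_(n.+1) F}} :=
  [set g : {poly_(n.+1) F} | `[< inOmega q n (val g) >]].

(* Main.v *)
Require Import Defs.
From HB Require Import structures.
From mathcomp Require Import all_boot all_order all_algebra all_field.
From mathcomp Require Import boolp.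
From mathcomp Require Import zify.
From mathcomp Require Import cyclic.
Import GRing.Theory.
Local Open Scope ring_scope.
Set Implicit Arguments. Unset Strict Implicit.

Section Gen.
Variables (F : finFieldType) (L : fieldType) (phi : {rmorphism F -> L}).
Variable q : nat.
Hypothesis Hq : [pchar L].-nat q.

Local Notation ev h x := ((map_poly phi h).[x]).

Lemma q_gt0 : (0 < q)%N.
Proof. by case/andP: Hq. Qed.

Lemma frob_sum (I : Type) (r : seq I) (P : pred I) (G : I -> L) :
  (\sum_(i <- r | P i) G i) ^+ q = \sum_(i <- r | P i) G i ^+ q.
Proof.
apply: (big_morph (fun x : L => x ^+ q)).
  by move=> x y; rewrite exprDn_pchar.
by rewrite expr0n eqn0Ngt q_gt0.
Qed.

Lemma dagger_root (g : {poly F}) (x : L) :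
  g`_0 != 0 -> x != 0 -> ev g x = 0 -> ev (dagger q g) ((x^-1) ^+ q) = 0.
Proof.
move=> g0 x0 gx.
set n := size g.
have szd : (size (map_poly phi (dagger q g)) <= n)%N.
  rewrite size_map_poly /dagger /conjp /map_poly.
  apply: leq_trans (size_poly _ _) _.
  apply: leq_trans (size_scale_leq _ _) _.
  exact: size_poly.
rewrite (horner_coef_wide _ szd).
have -> : \sum_(i < n) (map_poly phi (dagger q g))`_i * (x^-1 ^+ q) ^+ i =
   (\sum_(i < n) phi ((g`_0)^-1) * phi (g`_(n.-1 - i)) * x^-1 ^+ i) ^+ q.
  rewrite frob_sum; apply: eq_bigr => i _.
  rewrite (coef_map_id0 _ _ (rmorph0 phi)) /dagger /conjp coef_map_id0; last by rewrite /conjq expr0n eqn0Ngt q_gt0.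
  have eX : forall (y : F) k, phi (y ^+ k) = phi y ^+ k by move=> y k; exact: rmorphXn.
  have eM : forall (y z : F), phi (y * z) = phi y * phi z by move=> y z; exact: rmorphM.
  have eV : forall (y : F), phi (y^-1) = (phi y)^-1 by move=> y; exact: fmorphV.
  rewrite /recip coefZ coef_poly ltn_ord /conjq eX eM eV.
  by rewrite -!exprM mulnC !exprM -!exprMn.
under eq_bigr do rewrite -mulrA.
rewrite -big_distrr /=.
have -> : \sum_(i < n) phi g`_(n.-1 - i) * x^-1 ^+ i =
   (x^-1) ^+ n.-1 * ev g x.
  rewrite (horner_coef_wide _ (eq_leq (size_map_poly _ _))) big_distrr /=.
  rewrite (reindex_inj rev_ord_inj) /=.
  apply: eq_bigr => i _.
  have hi : (i <= n.-1)%N by rewrite -ltnS (leq_trans (ltn_ord i)) // leqSpred.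
  have e1 : (n - i.+1 = n.-1 - i)%N by lia.
  have e2 : (n.-1 - (n.-1 - i) = i)%N by lia.
  rewrite e1 e2 (coef_map_id0 _ _ (rmorph0 phi)).
  rewrite mulrCA; congr (_ * _).
  by rewrite -{2}(subnK hi) exprD -mulrA -exprMn mulVf // expr1n mulr1.
by rewrite gx !mulr0 expr0n eqn0Ngt q_gt0.
Qed.

Lemma evM h1 h2 x : ev (h1 * h2) x = ev h1 x * ev h2 x.
Proof. by rewrite rmorphM hornerM. Qed.

Lemma evB h1 h2 x : ev (h1 - h2) x = ev h1 x - ev h2 x.
Proof. by rewrite rmorphB hornerD hornerN. Qed.

Lemma evXn1 n x : ev ('X^n - 1) x = x ^+ n - 1.
Proof. by rewrite evB map_polyXn rmorph1 hornerXn hornerC. Qed.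

Lemma evX1 x : ev ('X - 1) x = x - 1.
Proof. by rewrite evB rmorph1 map_polyX hornerX hornerC. Qed.

Lemma evcomp h k x : ev (h \Po 'X^k) x = ev h (x ^+ k).
Proof. by rewrite map_comp_poly horner_comp map_polyXn hornerXn. Qed.

Lemma evdvd g h x : g %| h -> ev g x = 0 -> ev h x = 0.
Proof. by move=> /divpK <- gx; rewrite evM gx mulr0. Qed.

Lemma irr_div g x h : irreducible_poly g -> ev g x = 0 -> ev h x = 0 -> g %| h.
Proof.
move=> gi gx hx.
have g0 : g != 0 by apply: contraTneq (gi.1) => ->; rewrite size_poly0.
have rx : ev (h %% g) x = 0.
  by move: hx; rewrite {1}(divp_eq h g) rmorphD hornerD evM gx mulr0 add0r.
apply/modp_eq0P; apply/eqP; apply: contraT => r0.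
have := (iffRL (subfx_irreducibleP (iota := phi) (z := x) (p := g) (introT eqP gx) g0) gi (h %% g) (introT eqP rx) r0).
by rewrite leqNgt ltn_modp g0.
Qed.

Lemma minp_exists x : (exists h : {poly F}, h != 0 /\ ev h x = 0) ->
  exists g, [/\ g \is monic, ev g x = 0 & irreducible_poly g].
Proof.
move=> hex.
pose P n := `[< exists h : {poly F}, [/\ h != 0, size h = n & ev h x = 0] >].
have PE : exists n, P n.
  case: hex => h [h0 hx]; exists (size h); apply/asboolP; by exists h.
case: (ex_minnP PE) => m /asboolP [h [h0 hs hx]] hmin.
have l0 : lead_coef h != 0 by rewrite lead_coef_eq0.
exists ((lead_coef h)^-1 *: h); split.
- by rewrite monicE lead_coefZ mulVf.
- by rewrite map_polyZ hornerZ hx mulr0.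
have gx : root (map_poly phi ((lead_coef h)^-1 *: h)) x.
  by rewrite /root map_polyZ hornerZ hx mulr0.
have g0 : (lead_coef h)^-1 *: h != 0 by rewrite scaler_eq0 negb_or invr_eq0 l0.
apply/(subfx_irreducibleP gx g0) => r rx r0.
rewrite size_scale ?invr_eq0 // hs; apply: hmin; apply/asboolP.
by exists r; split => //; apply/eqP.
Qed.
End Gen.

Lemma dagger_monic (F : finFieldType) (q : nat) (g : {poly F}) :
  (0 < q)%N -> g \is monic -> g`_0 != 0 ->
  dagger q g \is monic /\ size (dagger q g) = size g.
Proof.
move=> q0 gm g0.
set n := size g.
have n0 : (0 < n)%N by rewrite size_poly_gt0 monic_neq0.
have sP : size (\poly_(i < n) g`_(n.-1 - i)) = n by rewrite size_poly_eq // subnn.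
have lP : lead_coef (\poly_(i < n) g`_(n.-1 - i)) = g`_0.
  by rewrite lead_coefE sP coef_poly prednK // leqnn subnn.
have ci : (g`_0)^-1 != 0 by rewrite invr_eq0.
have sR : size (recip g) = n by rewrite /recip size_scale.
have lR : lead_coef (recip g) = 1 by rewrite /recip lead_coefZ lP mulVf.
have c0 : conjq q (0 : F) = 0 by rewrite /conjq expr0n eqn0Ngt q0.
have c1 : conjq q (lead_coef (recip g)) = 1 by rewrite lR /conjq expr1n.
rewrite /dagger /conjp; split.
  by rewrite monicE lead_coef_map_id0 // c1 ?oner_neq0.
by rewrite size_map_poly_id0 // c1 oner_neq0.
Qed.

Lemma monic_dvd_eq (F : fieldType) (g h : {poly F}) :
  g \is monic -> h \is monic -> g %| h -> size h = size g -> h = g.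
Proof.
move=> gm hm gh hs; apply/esym/eqP.
by rewrite -eqp_monic // -dvdp_size_eqp // hs.
Qed.

Lemma key (F : finFieldType) (L : fieldType) (phi : {rmorphism F -> L})
  (q n1 n2 : nat) (Hq : [pchar L].-nat q) (cq : coprime n1 q) (n10 : (0 < n1)%N)
  (H1 : forall f : {poly F}, inOmega q n1 f -> f = 'X - 1) (a : L) :
  a != 0 -> a ^+ (n1 * n2) = 1 ->
  (forall h, (map_poly phi h).[a] = 0 -> (map_poly phi h).[a^-1 ^+ q] = 0) ->
  a ^+ n2 = 1.
Proof.
move=> a0 aN Pa.
have q0 : (0 < q)%N by case/andP: Hq.
set b := a ^+ n2.
have b1 : b ^+ n1 = 1 by rewrite -exprM mulnC.
have b0 : b != 0 by rewrite expf_neq0.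
have inv : forall y : L, y ^+ n1 = 1 -> y^-1 = y ^+ n1.-1.
  move=> y y1.
  have y0 : y != 0 by apply: contra_eq_neq y1 => ->; rewrite expr0n gtn_eqF // eq_sym oner_neq0.
  by apply: (mulfI y0); rewrite mulfV // -exprS prednK // y1.
set s := (n1.-1 * q)%N.
have Pb : forall h, (map_poly phi h).[b] = 0 -> (map_poly phi h).[b ^+ s] = 0.
  move=> h hb.
  have := Pa (h \Po 'X^n2); rewrite !evcomp => /(_ hb).
  by rewrite /s exprM -inv // /b -!exprM mulnC exprM exprVn.
have It : forall j h, (map_poly phi h).[b] = 0 -> (map_poly phi h).[b ^+ (s ^ j)] = 0.
  elim=> [|j IH] h hb; first by rewrite expn0 expr1.
  rewrite expnS exprM -evcomp; apply: Pb; rewrite evcomp; exact: IH.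
have [g [gm gb gi]] : exists g, [/\ g \is monic, (map_poly phi g).[b] = 0 & irreducible_poly g].
  apply: minp_exists; exists ('X^n1 - 1); split.
    by apply: monic_neq0; apply: monic_Xn_sub_1.
  by rewrite evXn1 b1 subrr.
have g0 : g`_0 != 0.
  apply/negP => /eqP g00.
  have r0 : root g 0 by rewrite /root horner_coef0 g00.
  have := gi.2 ('X - 0%:P); rewrite size_XsubC dvdp_XsubCl => /(_ isT r0).
  rewrite eqp_monic ?monicXsubC // => /eqP ge.
  by move: gb; rewrite -ge map_polyXsubC hornerXsubC rmorph0 subr0; apply/eqP.
set j := (totient n1).-1.
set c := b ^+ (s ^ j).
have cg : (map_poly phi g).[c] = 0 := It j g gb.
have c1 : c ^+ n1 = 1 by rewrite /c -exprM mulnC exprM b1 expr1n.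
have c0 : c != 0 by rewrite expf_neq0.
have cinv : c^-1 ^+ q = b.
  rewrite inv // -exprM -/s /c -exprM -expnSr /j prednK ?totient_gt0 //.
  have cs : coprime s n1 by rewrite coprimeMl coprimePn // coprime_sym cq.
  by rewrite -(expr_mod _ b1) Euler_exp_totient // expr_mod // expr1.
have dg : (map_poly phi (dagger q g)).[b] = 0.
  by rewrite -cinv; apply: dagger_root.
have gd : g %| dagger q g := irr_div gi gb dg.
have [dm ds] := dagger_monic q0 gm g0.
have gdeq : dagger q g = g := monic_dvd_eq gm dm gd ds.
have : g = 'X - 1.
  apply: H1; split; first by split => //.
  by apply: (irr_div gi gb); rewrite evXn1 b1 subrr.
move=> ge; move: gb; rewrite ge evX1 => /eqP; rewrite subr_eq0 => /eqP.
done.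
Qed.

Lemma Xm1_in (F : finFieldType) (q n : nat) : [pchar F].-nat q -> (0 < n)%N ->
  inOmega q n ('X - 1 : {poly F}).
Proof.
move=> Hq n0.
have q0 : (0 < q)%N by case/andP: Hq.
rewrite -polyC1.
have gm : ('X - 1%:P : {poly F}) \is monic := monicXsubC 1.
have g0 : ('X - 1%:P : {poly F})`_0 != 0.
  by rewrite coefB coefX coefC /= sub0r oppr_eq0 oner_neq0.
split; last by rewrite dvdp_XsubCl /root !hornerE expr1n subrr.
split => //; first exact: irredp_XsubC.
have := @dagger_root F F idfun q Hq ('X - 1%:P) 1 g0 (oner_neq0 _).
rewrite !map_poly_id // invr1 expr1n hornerXsubC subrr => /(_ erefl) dr.
have [dm ds] := dagger_monic q0 gm g0.
apply/esym/(monic_dvd_eq gm dm) => //.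
by rewrite dvdp_XsubCl /root dr.
Qed.

Lemma OmegaN (F : finFieldType) (q n1 n2 : nat) : [pchar F].-nat q ->
  (0 < n1)%N -> (0 < n2)%N ->
  coprime n1 n2 -> coprime n1 q -> coprime n2 q ->
  (forall f : {poly F}, inOmega q n1 f -> f = 'X - 1) ->
  (forall f : {poly F}, inOmega q n2 f -> f = 'X - 1) ->
  forall f : {poly F}, inOmega q (n1 * n2) f -> f = 'X - 1.
Proof.
move=> HqF n10 n20 c12 c1q c2q H1 H2 f [[fm fi f0 fd] fN].
have sf : (1 < size f)%N := fi.1.
have [E [phi [a ar _]]] := countable_field_extension sf.
have HqE : [pchar E].-nat q by rewrite (eq_pnat _ (fmorph_pchar phi)).
have fa : (map_poly phi f).[a] = 0 by apply/eqP.
have a0 : a != 0.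
  apply: contra_eq_neq fa => ->.
  by rewrite horner_coef0 (coef_map_id0 _ _ (rmorph0 phi)) fmorph_eq0.
have aN : a ^+ (n1 * n2) = 1.
  by apply/eqP; rewrite -subr_eq0 -(evXn1 phi); apply/eqP; exact: (evdvd fN fa).
have Pa : forall h, (map_poly phi h).[a] = 0 -> (map_poly phi h).[a^-1 ^+ q] = 0.
  move=> h ha; apply: (evdvd (irr_div fi fa ha)).
  by rewrite {1}fd; apply: dagger_root.
have a2 := key HqE c1q n10 H1 a0 aN Pa.
have a1 : a ^+ n1 = 1.
  by apply: (key HqE c2q n20 H2 a0 _ Pa); rewrite mulnC.
have a_1 : a = 1.
  case: (egcdnP n2 n10) => km kn e _.
  move: e; rewrite (eqP c12) => e.
  have := congr1 (fun k => a ^+ k) e; rewrite /= exprD expr1 mulnC exprM a1 expr1n.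
  by rewrite mulnC exprM a2 expr1n mul1r.
have fX : f %| 'X - 1 by apply: (irr_div fi fa); rewrite evX1 a_1 subrr.
apply/esym; apply: (monic_dvd_eq fm _ fX).
  by rewrite -polyC1 monicXsubC.
apply/eqP; rewrite eqn_leq; apply/andP; split; last first.
  by apply: dvdp_leq fX; rewrite -polyC1 polyXsubC_eq0.
by rewrite -polyC1 size_XsubC.
Qed.

Lemma Omega1 (F : finFieldType) (q n : nat) : (0 < n)%N ->
  (forall f : {poly F}, inOmega q n f -> f = 'X - 1) ->
  inOmega q n ('X - 1 : {poly F}) -> #|Omega F q n| = 1%N.
Proof.
move=> n0 H Xin.
have sz : ('X - 1 : {poly F}) \is a poly_of_size n.+1.
  by rewrite qualifE /= -polyC1 size_XsubC.
apply/eqP/cards1P; exists (NPoly sz).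
apply/setP => y; rewrite !inE; apply/asboolP/eqP => [yin | ->] //.
by apply: val_inj => /=; apply: H.
Qed.

Theorem corollary2p10 (q : nat) (F : finFieldType) (n1 n2 : nat) :
  prime_power q -> #|F| = (q ^ 2)%N ->
  odd n1 -> odd n2 -> (0 < n1)%N -> (0 < n2)%N ->
  coprime n1 n2 -> coprime n1 q -> coprime n2 q ->
  (forall f : {poly F}, inOmega q n1 f -> f = 'X - 1) ->
  (forall f : {poly F}, inOmega q n2 f -> f = 'X - 1) ->
  #|Omega F q (n1 * n2)| = (#|Omega F q n1| * #|Omega F q n2|)%N /\
  (#|Omega F q n1| * #|Omega F q n2|)%N = 1%N.
Proof.
move=> [p [k [pp k0 qe]]] cF _ _ n10 n20 c12 c1q c2q H1 H2.
have pF : p \in [pchar F].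
  by apply: (card_finPcharP (n := (k * 2)%N)) => //; rewrite cF qe expnM.
have Hq : [pchar F].-nat q by rewrite qe pnatX pnatE // pF.
have N0 : (0 < n1 * n2)%N by rewrite muln_gt0 n10.
rewrite (Omega1 n10 H1 (Xm1_in Hq n10)) (Omega1 n20 H2 (Xm1_in Hq n20)).
rewrite (Omega1 N0 (OmegaN Hq n10 n20 c12 c1q c2q H1 H2) (Xm1_in Hq N0)).
by [].
Qed.
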